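(* Let $X,Y$ be Banach spaces and let $T:X\to Y$ be a hereditary-SCD-operator. Then for every $x^*\in X^*$ the operator $T\tilde{+}\mathrm{Re}\,x^*:X\to Y\oplus_1\mathbb{R}$, $x\mapsto(Tx,\mathrm{Re}\,x^*(x))$, is an SCD-operator, i.e. $[T\tilde{+}\mathrm{Re}\,x^*](B_X)$ is an SCD set.
   Context: $B_X$ is the closed unit ball of $X$. $Y\oplus_1\mathbb{R}$ is the direct sum (viewed as a real Banach space) with norm $\|(y,t)\|=\|y\|+|t|$. A slice of a convex bounded set $A$ is $S(A,z^*,\varepsilon)=\{a\in A:\ \mathrm{Re}\,z^*(a)>\sup\mathrm{Re}\,z^*(A)-\varepsilon\}$; $A$ is an SCD set if there is a sequence $(S_n)$ of slices of $A$ such that $A\subseteq\overline{\mathrm{conv}}(B)$ for every $B\subseteq A$ intersecting all the $S_n$. An operator $S:X\to Z$ is an SCD-operator if $S(B_X)$ is an SCD set; $T:X\to Y$ is a hereditary-SCD-operator if every convex subset of $T(B_X)$ is an SCD set. *)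

(* Defs.v *)
From HB Require Import structures.
From mathcomp Require Import all_boot all_order all_algebra.
From mathcomp Require Import all_classical all_reals all_analysis.
Set Implicit Arguments. Unset Strict Implicit. Unset Printing Implicit Defensive.
Import Order.TTheory GRing.Theory Num.Theory.
Import numFieldNormedType.Exports.
Local Open Scope classical_set_scope.
Local Open Scope ring_scope.

(* Generic framework: a real vector space V together with a norm function
   N : V -> R.  This lets us treat both the norm of a normed space and the
   l1-norm of Y (+)_1 R uniformly and literally. *)

Section SCD.
Variables (R : realType) (V : lmodType R) (N : V -> R).

Definition bdd_functional (f : {linear V -> R^o}) : Prop :=
  exists C : R, forall v, `|f v| <= C * N v.

Definition convex_set_in (A : set V) : Prop :=
  forall a b (t : R), A a -> A b -> 0 <= t <= 1 -> A (t *: a + (1 - t) *: b).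

Definition bounded_in (A : set V) : Prop :=
  exists M : R, forall a, A a -> N a <= M.

Definition conv_hull (B : set V) : set V :=
  [set z | exists (n : nat) (w : 'I_n -> R) (b : 'I_n -> V),
     (forall i, 0 <= w i /\ B (b i)) /\ \sum_(i < n) w i = 1 /\
     z = \sum_(i < n) w i *: b i].

Definition closed_conv_hull (B : set V) : set V :=
  [set z | forall e : R, 0 < e -> exists2 c, conv_hull B c & N (z - c) < e].

Definition slice (A : set V) (f : {linear V -> R^o}) (eps : R) : set V :=
  [set a | A a /\ sup [set f x | x in A] - eps < f a].

Definition SCD_set (A : set V) : Prop :=
  convex_set_in A /\ bounded_in A /\
  exists (f : nat -> {linear V -> R^o}) (eps : nat -> R),
    (forall n, bdd_functional (f n) /\ 0 < eps n) /\
    forall B : set V, B `<=` A ->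
      (forall n, B `&` slice A (f n) (eps n) !=set0) ->
      A `<=` closed_conv_hull B.
End SCD.

Definition unit_ball (R : realType) (X : normedModType R) : set X :=
  [set x | `|x| <= 1].

Definition SCD_operator (R : realType) (X : normedModType R) (Z : lmodType R)
  (NZ : Z -> R) (S : X -> Z) : Prop :=
  SCD_set NZ (S @` @unit_ball _ X).

Definition hereditary_SCD_operator (R : realType) (X Y : normedModType R)
  (T : X -> Y) : Prop :=
  forall A : set Y, A `<=` T @` @unit_ball _ X ->
    convex_set_in A -> SCD_set (fun y : Y => `|y|) A.

Definition l1_norm (R : realType) (Y : normedModType R) (p : (Y * R^o)%type) : R :=
  `|p.1| + `|p.2|.

Definition op_sum (R : realType) (X Y : normedModType R)
  (T : X -> Y) (f : X -> R^o) : X -> (Y * R^o)%type :=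
  fun x => (T x, f x).

(* Main.v *)
Require Import Defs.
From HB Require Import structures.
From mathcomp Require Import all_boot all_order all_algebra.
From mathcomp Require Import all_classical all_reals all_analysis.
From mathcomp Require Import ring lra.
Import Order.TTheory GRing.Theory Num.Theory.
Import numFieldNormedType.Exports.
Local Open Scope classical_set_scope.
Local Open Scope ring_scope.
Set Implicit Arguments. Unset Strict Implicit. Unset Printing Implicit Defensive.
Section Gen.
Variables (R : realType) (V : lmodType R).

Lemma conv_combo (C : set V) : convex_set_in C ->
  forall n (w : 'I_n -> R) (b : 'I_n -> V),
  (forall i, 0 <= w i /\ C (b i)) -> \sum_(i < n) w i = 1 ->
  C (\sum_(i < n) w i *: b i).
Proof.
move=> cC; elim=> [|n IH] w b Hwb Hs.
  by move: Hs; rewrite big_ord0 => /eqP; rewrite eq_sym oner_eq0.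
rewrite big_ord_recr /=; rewrite big_ord_recr /= in Hs.
have Hge : forall i : 'I_n, 0 <= w (widen_ord (leqnSn n) i).
  by move=> i; case: (Hwb (widen_ord (leqnSn n) i)).
have S0 : 0 <= \sum_(i < n) w (widen_ord (leqnSn n) i) by apply: sumr_ge0.
case: (eqVneq (w ord_max) 1) => [H1|H1].
  have Z : \sum_(i < n) w (widen_ord (leqnSn n) i) = 0 by move: Hs; rewrite H1; lra.
  rewrite big1 ?add0r ?H1 ?scale1r; first by case: (Hwb ord_max).
  move=> i _; rewrite (psumr_eq0P (P := xpredT) (fun i _ => Hge i) Z) //.
  by rewrite scale0r.
set s := \sum_(i < n) w (widen_ord (leqnSn n) i) in Hs S0.
have sne : s != 0.
  apply/eqP => s0; move: H1; rewrite -Hs s0 add0r eqxx //.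
have sgt : 0 < s by rewrite lt0r sne S0.
have -> : \sum_(i < n) w (widen_ord (leqnSn n) i) *: b (widen_ord (leqnSn n) i)
  = s *: \sum_(i < n) (w (widen_ord (leqnSn n) i) / s) *: b (widen_ord (leqnSn n) i).
  rewrite scaler_sumr; apply: eq_bigr => i _; rewrite scalerA.
  by rewrite mulrC divfK.
have -> : w ord_max = 1 - s by rewrite -Hs; lra.
have wm0 : 0 <= w ord_max by case: (Hwb ord_max).
apply: cC; last by rewrite (ltW sgt) /=; lra.
- apply: IH.
    move=> i; case: (Hwb (widen_ord (leqnSn n) i)) => h1 h2; split => //.
    by apply: divr_ge0 => //; apply: ltW.
  by rewrite -mulr_suml divff.
- by case: (Hwb ord_max).
Qed.

Lemma conv_hull_convex (B : set V) : convex_set_in (conv_hull B).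
Proof.
move=> a c t [n [w [b [Hwb [Hs ->]]]]] [m [w' [b' [Hwb' [Hs' ->]]]]] /andP[t0 t1].
pose W (i : 'I_(n + m)) := match fintype.split i with
  | inl i => t * w i | inr j => (1 - t) * w' j end.
pose Bb (i : 'I_(n + m)) := match fintype.split i with
  | inl i => b i | inr j => b' j end.
have El : forall i : 'I_n, fintype.split (lshift m i) = inl i.
  by move=> i; exact: (unsplitK (inl i)).
have Er : forall j : 'I_m, fintype.split (rshift n j) = inr j.
  by move=> j; exact: (unsplitK (inr j)).
exists (n + m)%N, W, Bb; split; [|split].
- move=> i; rewrite /W /Bb; case: (fintype.split i) => k.
    by case: (Hwb k) => h1 h2; split => //; apply: mulr_ge0.
  by case: (Hwb' k) => h1 h2; split => //; apply: mulr_ge0; lra.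
- rewrite big_split_ord /=.
  have -> : \sum_(i < n) W (lshift m i) = t * \sum_(i < n) w i.
    by rewrite mulr_sumr; apply: eq_bigr => i _; rewrite /W El.
  have -> : \sum_(i < m) W (rshift n i) = (1 - t) * \sum_(i < m) w' i.
    by rewrite mulr_sumr; apply: eq_bigr => i _; rewrite /W Er.
  by rewrite Hs Hs'; lra.
- rewrite big_split_ord /=.
  have -> : \sum_(i < n) W (lshift m i) *: Bb (lshift m i) = t *: \sum_(i < n) w i *: b i.
    by rewrite scaler_sumr; apply: eq_bigr => i _; rewrite /W /Bb El scalerA.
  have -> : \sum_(i < m) W (rshift n i) *: Bb (rshift n i) = (1 - t) *: \sum_(i < m) w' i *: b' i.
    by rewrite scaler_sumr; apply: eq_bigr => i _; rewrite /W /Bb Er scalerA.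
  by [].
Qed.

Lemma conv_hull_pt (B : set V) b : B b -> conv_hull B b.
Proof.
move=> Bb; exists 1%N, (fun _ => 1), (fun _ => b); split; [|split].
- by move=> i; split.
- by rewrite big_ord1.
- by rewrite big_ord1 scale1r.
Qed.

Lemma conv_hull_sub (B C : set V) : convex_set_in C -> B `<=` C ->
  conv_hull B `<=` C.
Proof.
move=> cC BC z [n [w [b [Hwb [Hs ->]]]]]; apply: conv_combo => //.
by move=> i; case: (Hwb i) => h1 h2; split => //; apply: BC.
Qed.

End Gen.
Section Quad.
Variables (R : realType) (V : lmodType R).

Definition gr (al be : {linear V -> R^o}) (N i : nat) : {linear V -> R^o} :=
  ((i%:R / N%:R) \*: al) \+ ((1 - i%:R / N%:R) \*: be).

Lemma grE al be N i v :
  gr al be N i v = (i%:R / N%:R) * al v + (1 - i%:R / N%:R) * be v.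
Proof. by []. Qed.

Lemma sup_ge (A : set V) (g : {linear V -> R^o}) (M : R) p :
  A p -> (forall v, A v -> g v <= M) -> g p <= sup [set g x | x in A].
Proof.
move=> Ap HM; apply: sup_upper_bound; last by exists p.
split; first by exists (g p); exists p.
by exists M => y [x Ax <-]; apply: HM.
Qed.

Lemma first_pos (P : nat -> bool) N : P N ->
  P 0%N \/ exists j, (j < N)%N /\ ~~ P j /\ P j.+1.
Proof.
elim: N => [|N IH] HN; first by left.
case: (boolP (P N)) => h.
  case: (IH h) => [|[j [j1 j2]]]; first by left.
  by right; exists j; split => //; apply: ltnW.
by right; exists N.
Qed.

Lemma mix2 (th ax bx ay by_ ka : R) : 0 <= th -> th < 1 -> 0 < ka ->
  ax <= 0 -> 0 < ay -> ka < th * ax + (1 - th) * bx ->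
  ka < th * ay + (1 - th) * by_ ->
  exists la, 0 <= la <= 1 /\ 0 < la * ax + (1 - la) * ay /\
     0 < la * bx + (1 - la) * by_.
Proof.
move=> th0 th1 ka0 ax0 ay0 Hx Hy.
have [h|h] := leP ay (ka / 2).
  exists 0; rewrite lexx ler01; split => //; split; first lra.
  have : th * ay <= ka / 2 by nra.
  nra.
have d0 : 0 < ay - ax by lra.
pose la := (ay - ka / 2) / (ay - ax).
have la0 : 0 <= la by apply: divr_ge0; lra.
have la1 : la <= 1 by rewrite ler_pdivrMr //; lra.
have Ea : la * ax + (1 - la) * ay = ka / 2.
  rewrite /la; field; apply/eqP; lra.
exists la; rewrite la0 la1; split => //; split; first by rewrite Ea; lra.
have E : (1 - th) * (la * bx + (1 - la) * by_) =
  la * (th * ax + (1 - th) * bx) + (1 - la) * (th * ay + (1 - th) * by_)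
  - th * (la * ax + (1 - la) * ay) by ring.
have H1 : la * ka <= la * (th * ax + (1 - th) * bx) by apply: ler_wpM2l => //; lra.
have H2 : (1 - la) * ka <= (1 - la) * (th * ay + (1 - th) * by_)
  by apply: ler_wpM2l; lra.
have H3 : th * (ka / 2) <= ka / 2 by nra.
have H4 : 0 < (1 - th) * (la * bx + (1 - la) * by_).
  rewrite E Ea.
  have : la * ka + (1 - la) * ka = ka by ring.
  (* strictness from la or 1-la positive *)
  have [l0|l0] := eqVneq la 0.
    have H2' : ka < (1 - la) * (th * ay + (1 - th) * by_) by rewrite l0 subr0 mul1r.
    move: H1; rewrite l0; lra.
  have l0' : 0 < la by rewrite lt0r l0 la0.
  have H1' : la * ka < la * (th * ax + (1 - th) * bx) by rewrite ltr_pM2l.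
  lra.
have th' : 0 < 1 - th by lra.
by rewrite pmulr_rgt0 in H4.
Qed.

End Quad.
Section Quad2.
Variables (R : realType) (V : lmodType R).

Lemma quad (K : set V) (al be : {linear V -> R^o}) (Rb a0 b0 : R) (p : V) :
  (forall v, K v -> `|al v| <= Rb /\ `|be v| <= Rb) -> K p ->
  a0 < al p -> b0 < be p ->
  exists N : nat, exists eta : R, 0 < eta /\ forall B : set V, B `<=` K ->
   (forall i, (i <= N)%N -> B `&` slice K (gr al be N i) eta !=set0) ->
   exists z, conv_hull B z /\ a0 < al z /\ b0 < be z.
Proof.
move=> HR Kp Ha Hb.
have [m [m0 [md1 md2]]] : exists m, 0 < m /\ m <= al p - a0 /\ m <= be p - b0.
  have [h|h] := leP (al p - a0) (be p - b0).
    by exists (al p - a0); split => //; lra.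
  by exists (be p - b0); split => //; lra.
have Rb0 : 0 <= Rb by case: (HR p Kp) => h _; apply: le_trans h.
set Rp := Rb + `|a0| + `|b0|.
have Rp0 : 0 <= Rp by rewrite /Rp; have := normr_ge0 a0; have := normr_ge0 b0; lra.
have [N [HN N0]] : exists N : nat, 8 * Rp / m < N%:R /\ (0 < N)%N.
  exists (Num.Def.archi_bound (8 * Rp / m)).+1; split; last exact: ltn0Sn.
  apply: (lt_le_trans (archi_boundP _)); first by apply: divr_ge0 => //; lra.
  by rewrite ler_nat.
have N0r : 0 < N%:R :> R by rewrite ltr0n.
pose u : R := 1 / N%:R.
have u0 : 0 < u by rewrite /u divr_gt0.
have Hu : 8 * Rp * u < m.
  rewrite /u mul1r ltr_pdivrMr //; move: HN; rewrite ltr_pdivrMr // => h.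
  by rewrite [m * _]mulrC.
exists N, (m / 4); split; first by lra.
move=> B HB Hsl.
have : forall i, exists q, (i <= N)%N -> B q /\ slice K (gr al be N i) (m / 4) q.
  move=> i; case: (boolP (i <= N)%N) => hi.
    by case: (Hsl i hi) => q [Bq Sq]; exists q.
  by exists p.
move=> /choice [qf Hq].
pose th (i : nat) : R := i%:R / N%:R.
have th0 : forall i, 0 <= th i by move=> i; apply: divr_ge0; apply: ler0n.
have th1 : forall i, (i <= N)%N -> th i <= 1.
  by move=> i hi; rewrite /th ler_pdivrMr // mul1r ler_nat.
have KI : forall i, (i <= N)%N ->
  m - m / 4 < th i * (al (qf i) - a0) + (1 - th i) * (be (qf i) - b0).
  move=> i hi; case: (Hq i hi) => Bq [Kq Sq].
  have Sg : gr al be N i p <= sup [set gr al be N i x | x in K].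
    apply: (sup_ge (M := Rb)) => // v Kv; rewrite grE.
    case: (HR v Kv) => h1 h2.
    have h1' : al v <= Rb by apply: le_trans (ler_norm _) h1.
    have h2' : be v <= Rb by apply: le_trans (ler_norm _) h2.
    have t0 := th0 i; have t1 := th1 i hi.
    have e1 : th i * al v <= th i * Rb by apply: ler_wpM2l.
    have e2 : (1 - th i) * be v <= (1 - th i) * Rb by apply: ler_wpM2l; lra.
    rewrite -/(th i); lra.
  move: Sq; rewrite !grE -/(th i) => Sq.
  have := th0 i; have := th1 i hi => t0 t1.
  have E1 : th i * m <= th i * (al p - a0) by apply: ler_wpM2l.
  have E2 : (1 - th i) * m <= (1 - th i) * (be p - b0) by apply: ler_wpM2l; lra.
  move: Sg; rewrite grE -/(th i) => Sg.
  lra.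
have bnd : forall i, (i <= N)%N -> `|al (qf i) - a0| <= Rp /\ `|be (qf i) - b0| <= Rp.
  move=> i hi; case: (Hq i hi) => Bq _; case: (HR _ (HB _ Bq)) => h1 h2.
  split.
    apply: (le_trans (ler_normB _ _)); rewrite /Rp; have := normr_ge0 b0; lra.
  apply: (le_trans (ler_normB _ _)); rewrite /Rp; have := normr_ge0 a0; lra.
have thN : th N = 1 by rewrite /th divff // pnatr_eq0 -lt0n.
have th00 : th 0%N = 0 by rewrite /th mul0r.
have PN : 0 < al (qf N) - a0.
  by have := KI N (leqnn N); rewrite thN subrr mul0r addr0 mul1r; lra.
case: (first_pos (P := fun i => 0 < al (qf i) - a0) PN) => [P0|[j [jN [Pj Pj1]]]].
  exists (qf 0%N); case: (Hq 0%N (leq0n _)) => Bq _.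
  split; first by apply: conv_hull_pt.
  have := KI 0%N (leq0n _); rewrite th00 mul0r add0r subr0 mul1r => h.
  split; lra.
have thj : th j.+1 = th j + u.
  by rewrite /th /u -mulrDl -natr1.
have hj : (j <= N)%N by apply: ltnW.
have Ix := KI j hj.
have Iy := KI j.+1 jN.
have [ba bb] := bnd j.+1 jN.
have ba' := ler_norm (al (qf j.+1) - a0).
have ba'' : - (al (qf j.+1) - a0) <= Rp by apply: le_trans ba; rewrite -normrN ler_norm.
have bb' := ler_norm (be (qf j.+1) - b0).
have bb'' : - (be (qf j.+1) - b0) <= Rp by apply: le_trans bb; rewrite -normrN ler_norm.
have Iy' : m / 2 < th j * (al (qf j.+1) - a0) + (1 - th j) * (be (qf j.+1) - b0).
  move: Iy; rewrite thj => Iy.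
  have : u * ((al (qf j.+1) - a0) - (be (qf j.+1) - b0)) <= u * (2 * Rp).
    by apply: ler_wpM2l; [lra | lra].
  move=> hh; clear -hh Iy Hu m0; lra.
have thlt : th j < 1 by have := th1 _ jN; rewrite thj; clear -u0; lra.
have Pj' : al (qf j) - a0 <= 0 by rewrite leNgt.
have k1 : 0 < m / 2 by clear -m0; lra.
have k2 : m / 2 < th j * (al (qf j) - a0) + (1 - th j) * (be (qf j) - b0) by clear -Ix m0; lra.
have [la [/andP [la0 la1] [Ha' Hb']]] := mix2 (th0 j) thlt k1 Pj' Pj1 k2 Iy'.
exists (la *: qf j + (1 - la) *: qf j.+1).
case: (Hq j hj) => Bx _; case: (Hq j.+1 jN) => By _.
split.
  by apply: conv_hull_convex; [apply: conv_hull_pt | apply: conv_hull_pt | rewrite la0 la1].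
have Ea : al (la *: qf j + (1 - la) *: qf j.+1) = la * al (qf j) + (1 - la) * al (qf j.+1).
  by rewrite linearD !linearZ.
have Eb : be (la *: qf j + (1 - la) *: qf j.+1) = la * be (qf j) + (1 - la) * be (qf j.+1).
  by rewrite linearD !linearZ.
rewrite Ea Eb; split.
  by clear -Ha'; lra.
by clear -Hb'; lra.
Qed.
End Quad2.
Section Gen4.
Variables (R : realType) (V W : lmodType R).

Lemma conv_lt (t x y a : R) : 0 <= t <= 1 -> a < x -> a < y -> a < t * x + (1 - t) * y.
Proof.
move=> /andP[t0 t1] hx hy.
have [->|tn] := eqVneq t 0; first by rewrite mul0r add0r subr0 mul1r.
have tp : 0 < t by rewrite lt0r tn t0.
have h1 : t * a < t * x by rewrite ltr_pM2l.
have h2 : (1 - t) * a <= (1 - t) * y by apply: ler_wpM2l; [lra | apply: ltW].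
lra.
Qed.

Lemma convex_setI (A B : set V) : convex_set_in A -> convex_set_in B ->
  convex_set_in (A `&` B).
Proof. by move=> cA cB a b t [Aa Ba] [Ab Bb] ht; split; [apply: cA | apply: cB]. Qed.

Lemma convex_half (al : {linear V -> R^o}) (a : R) : convex_set_in [set z | a < al z].
Proof.
move=> x y t hx hy ht /=.
have -> : al (t *: x + (1 - t) *: y) = t * al x + (1 - t) * al y.
  by rewrite linearD !linearZ.
exact: conv_lt.
Qed.

Lemma lift_conv (C : set V) (f : {linear V -> W}) c :
  convex_set_in C -> conv_hull (f @` C) c -> exists2 z, C z & f z = c.
Proof.
move=> cC [n [w [b [Hwb [Hs ->]]]]].
have : forall i : 'I_n, exists z, C z /\ f z = b i.
  by move=> i; case: (Hwb i) => _ [z Cz <-]; exists z.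
move=> /choice [zf Hz].
exists (\sum_(i < n) w i *: zf i).
  apply: conv_combo => // i; split; first by case: (Hwb i).
  by case: (Hz i).
rewrite linear_sum; apply: eq_bigr => i _; rewrite linearZ.
by case: (Hz i) => _ ->.
Qed.

Lemma bdd_gr (Nm : V -> R) (al be : {linear V -> R^o}) N i :
  (forall v, 0 <= Nm v) -> bdd_functional Nm al -> bdd_functional Nm be ->
  bdd_functional Nm (gr al be N i).
Proof.
move=> N0 [C1 H1] [C2 H2].
pose a : R := i%:R / N%:R; pose b : R := 1 - i%:R / N%:R.
exists (`|a| * `|C1| + `|b| * `|C2|) => v; rewrite grE -/a -/b.
have e1 : `|al v| <= `|C1| * Nm v.
  by apply: (le_trans (H1 v)); apply: ler_wpM2r => //; apply: ler_norm.
have e2 : `|be v| <= `|C2| * Nm v.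
  by apply: (le_trans (H2 v)); apply: ler_wpM2r => //; apply: ler_norm.
apply: (le_trans (ler_normD _ _)); rewrite (normrM a) (normrM b).
have f1 : `|a| * `|al v| <= `|a| * (`|C1| * Nm v) by apply: ler_wpM2l.
have f2 : `|b| * `|be v| <= `|b| * (`|C2| * Nm v) by apply: ler_wpM2l.
have -> : (`|a| * `|C1| + `|b| * `|C2|) * Nm v = `|a| * (`|C1| * Nm v) + `|b| * (`|C2| * Nm v) by ring.
lra.
Qed.

End Gen4.

Lemma bound_lin (R : realType) (V W : normedModType R) (f : {linear V -> W}) :
  continuous f -> exists C : R, 0 <= C /\ forall x, `|f x| <= C * `|x|.
Proof.
move=> hf.
have := continuous_linear_bounded 0 (hf 0).
move=> /linear_boundedP [M [Mr HM]].
exists (`|M| + 1); split; first by have := normr_ge0 M; lra.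
apply: HM; have := ler_norm M; lra.
Qed.
Definition sgn (R : realType) (sg : bool) : R := if sg then 1 else -1.

Lemma sgn_norm (R : realType) sg (x : R) : `|sgn R sg * x| = `|x|.
Proof. by case: sg; rewrite /sgn ?mul1r ?mulN1r ?normrN. Qed.

Theorem lemma5p12 (R : realType) (X Y : completeNormedModType R)
  (T : {linear X -> Y}) (xs : {linear X -> R^o}) :
  continuous T -> continuous xs ->
  hereditary_SCD_operator T ->
  SCD_operator (@l1_norm R Y) (op_sum T xs).
Proof.
move=> cT cx hH.
have [CT [CT0 HCT]] := bound_lin cT.
have [Cf [Cf0 HCf]] := bound_lin cx.
rewrite /SCD_operator.
set K := op_sum T xs @` @unit_ball _ X.
have cvx : forall (x y : X) (t : R), `|x| <= 1 -> `|y| <= 1 -> 0 <= t <= 1 ->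
    `|t *: x + (1 - t) *: y| <= 1.
  move=> x y t hx hy /andP[t0 t1].
  apply: (le_trans (ler_normD _ _)); rewrite !normrZ (ger0_norm t0) ger0_norm; last lra.
  have : t * `|x| <= t * 1 by apply: ler_wpM2l.
  have : (1-t) * `|y| <= (1-t) * 1 by apply: ler_wpM2l; lra.
  lra.
have Kconv : convex_set_in K.
  move=> a b t [x hx <-] [y hy <-] ht.
  exists (t *: x + (1 - t) *: y); first exact: cvx.
  by rewrite /op_sum !linearD !linearZ.
have Kb : bounded_in (@l1_norm R Y) K.
  exists (CT + Cf) => z [x hx <-]; rewrite /l1_norm /op_sum /=.
  rewrite /unit_ball /= in hx.
  have h1 : CT * `|x| <= CT * 1 by apply: ler_wpM2l.
  have h2 : Cf * `|x| <= Cf * 1 by apply: ler_wpM2l.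
  have := HCT x; have := HCf x; lra.
pose E (sg : bool) (t : R) : set Y :=
  T @` [set x | `|x| <= 1 /\ sgn R sg * t < sgn R sg * xs x].
have HE : forall sg t, SCD_set (fun y : Y => `|y|) (E sg t).
  move=> sg t; apply: hH.
    by move=> y [x [hx _] <-]; exists x.
  move=> a b l [x [hx hxt] <-] [y [hy hyt] <-] hl.
  exists (l *: x + (1 - l) *: y); last by rewrite linearD !linearZ.
  split; first exact: cvx.
  have -> : sgn R sg * xs (l *: x + (1 - l) *: y) =
     l * (sgn R sg * xs x) + (1 - l) * (sgn R sg * xs y).
    rewrite linearD !linearZ /=.
    have -> : l *: xs x + (1 - l) *: xs y = l * xs x + (1 - l) * xs y by [].
    ring.
  exact: conv_lt.
have /choice [Z HZ] : forall st : bool * rat,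
  exists zz : (nat -> {linear Y -> R^o}) * (nat -> R),
   (forall n, bdd_functional (fun y : Y => `|y|) (zz.1 n) /\ 0 < zz.2 n) /\
   forall B, B `<=` E st.1 (ratr st.2) ->
    (forall n, B `&` slice (E st.1 (ratr st.2)) (zz.1 n) (zz.2 n) !=set0) ->
    E st.1 (ratr st.2) `<=` closed_conv_hull (fun y : Y => `|y|) B.
  move=> [sg t]; have [_ [_ [f [eps H]]]] := HE sg (ratr t).
  by exists (f, eps).
pose zf st := (Z st).1.
pose ze st := (Z st).2.
pose alpha (sg : bool) : {linear (Y * R^o)%type -> R^o} := sgn R sg \*: snd.
pose beta (z : {linear Y -> R^o}) : {linear (Y * R^o)%type -> R^o} := z \o fst.
have alphaE : forall sg z, alpha sg z = sgn R sg * z.2 by [].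
have betaE : forall zz z, beta zz z = zz z.1 by [].
have /choice [NE HNE] : forall k : bool * rat * nat, exists ne : nat * R,
  0 < ne.2 /\ (E k.1.1 (ratr k.1.2) !=set0 -> forall B, B `<=` K ->
   (forall i, (i <= ne.1)%N ->
      B `&` slice K (gr (alpha k.1.1) (beta (zf k.1 k.2)) ne.1 i) ne.2 !=set0) ->
   exists z, conv_hull B z /\ sgn R k.1.1 * ratr k.1.2 < alpha k.1.1 z /\
     sup [set zf k.1 k.2 y | y in E k.1.1 (ratr k.1.2)] - ze k.1 k.2
       < beta (zf k.1 k.2) z).
  move=> [[sg t] n] /=.
  case: (pselect (E sg (ratr t) !=set0)) => [hne|hne]; last first.
    by exists (0%N, 1); split => // /hne.
  have [Hn _] := HZ (sg, t).
  have [[Cz HCz] epos] := Hn n.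
  rewrite -/(zf (sg, t) n) -/(ze (sg, t) n) in HCz epos.
  have bE : forall x : X, `|x| <= 1 -> `|zf (sg, t) n (T x)| <= `|Cz| * CT.
    move=> x hx; apply: (le_trans (HCz _)).
    apply: (le_trans (ler_wpM2r (normr_ge0 _) (ler_norm Cz))).
    apply: ler_wpM2l => //; apply: (le_trans (HCT x)).
    by rewrite -{2}(mulr1 CT); apply: ler_wpM2l.
  have hs : has_sup [set zf (sg, t) n y | y in E sg (ratr t)].
    split.
      by case: hne => y Ey; exists (zf (sg, t) n y); exists y.
    exists (`|Cz| * CT) => v [y [x [hx _] <-] <-].
    by apply: le_trans (bE x hx); apply: ler_norm.
  have [v [y [x [hx hxt] <-] <-] hv] := sup_adherent epos hs.
  have Kp : K (T x, xs x) by exists x.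
  have bK : forall v, K v -> `|alpha sg v| <= Cf + `|Cz| * CT /\
                         `|beta (zf (sg, t) n) v| <= Cf + `|Cz| * CT.
    move=> w [x' hx' <-]; rewrite alphaE betaE /op_sum /= sgn_norm.
    rewrite /unit_ball /= in hx'.
    have h1 : `|xs x'| <= Cf.
      by apply: (le_trans (HCf x')); rewrite -{2}(mulr1 Cf); apply: ler_wpM2l.
    have h2 := bE x' hx'.
    have h3 := normr_ge0 Cz.
    have h4 : 0 <= `|Cz| * CT by apply: mulr_ge0.
    split; lra.
  have [N [eta [eta0 HQ]]] := quad bK Kp (a0 := sgn R sg * ratr t)
     (b0 := sup [set zf (sg, t) n y | y in E sg (ratr t)] - ze (sg, t) n) hxt hv.
  by exists (N, eta); split => // _; exact: HQ.
pose D (k : bool * rat * nat * nat) : {linear (Y * R^o)%type -> R^o} * R :=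
  (gr (alpha k.1.1.1) (beta (zf k.1.1 k.1.2)) (NE k.1).1 k.2, (NE k.1).2).
pose dflt : {linear (Y * R^o)%type -> R^o} * R := (alpha true, 1).
pose F (k : nat) := odflt dflt (omap D (unpickle k)).
have bdd_alpha : forall sg, bdd_functional (@l1_norm R Y) (alpha sg).
  move=> sg; exists 1 => z; rewrite alphaE sgn_norm mul1r /l1_norm.
  have := normr_ge0 z.1; lra.
have bdd_beta : forall zz : {linear Y -> R^o}, bdd_functional (fun y : Y => `|y|) zz ->
    bdd_functional (@l1_norm R Y) (beta zz).
  move=> zz [C HC]; exists `|C| => z; rewrite betaE /l1_norm.
  apply: (le_trans (HC _)); apply: (le_trans (ler_wpM2r (normr_ge0 _) (ler_norm C))).
  apply: ler_wpM2l => //; have := normr_ge0 z.2; lra.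
have l1_ge0 : forall z, 0 <= @l1_norm R Y z.
  by move=> z; rewrite /l1_norm; apply: addr_ge0.
split => //; split => //.
exists (fun k => (F k).1), (fun k => (F k).2); split.
  move=> k; rewrite /F; case: (unpickle k) => [kk|] /=; last first.
    by split => //; apply: bdd_alpha.
  split; last by case: (HNE kk.1).
  apply: bdd_gr => //; apply: bdd_beta.
  by case: (HZ kk.1.1) => /(_ kk.1.2) [].
move=> B HB Hm.
have cB : conv_hull B `<=` K by apply: conv_hull_sub.
pose C sg t := conv_hull B `&` [set z | sgn R sg * t < alpha sg z].
have Csub : forall sg t, fst @` C sg t `<=` E sg t.
  move=> sg t u [z [cz hz] <-].
  have [x hx Ez] := cB _ cz.
  exists x => //; last by rewrite -Ez.
  by split => //; move: hz => /=; rewrite -Ez.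
have key : forall sg (t : rat), E sg (ratr t) !=set0 ->
    E sg (ratr t) `<=` closed_conv_hull (fun y : Y => `|y|) (fst @` C sg (ratr t)).
  move=> sg t hne; apply: (HZ (sg, t)).2; first exact: Csub.
  move=> n.
  have [_ HQ] := HNE (sg, t, n).
  have [|z [cz [h1 h2]]] := HQ hne B HB.
    move=> i hi; have := Hm (pickle (sg, t, n, i)).
    by rewrite /F pickleK.
  exists z.1; split; first by exists z.
  split; first by apply: Csub; exists z.
  by move: h2; rewrite betaE.
move=> w [x0 hx0 <-] e e0.
rewrite /unit_ball /= in hx0.
have [q1] := @rat_in_itvoo R (xs x0 - e / 4) (xs x0) ltac:(lra).
rewrite in_itv /= => /andP [q1a q1b].
have [q2] := @rat_in_itvoo R (xs x0) (xs x0 + e / 4) ltac:(lra).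
rewrite in_itv /= => /andP [q2a q2b].
have E1 : E true (ratr q1) (T x0).
  by exists x0 => //; split => //; rewrite /sgn !mul1r.
have E2 : E false (ratr q2) (T x0).
  by exists x0 => //; split => //; rewrite /sgn !mulN1r ltrN2.
have e2 : 0 < e / 2 by lra.
have [c1 hc1 hd1] := key true q1 (ex_intro _ _ E1) _ E1 _ e2.
have [c2 hc2 hd2] := key false q2 (ex_intro _ _ E2) _ E2 _ e2.
have cC : forall sg t, convex_set_in (C sg t).
  by move=> sg t; apply: convex_setI; [apply: conv_hull_convex | apply: convex_half].
have [z1 [cz1 hz1] Ez1] := lift_conv (cC true (ratr q1)) hc1.
have [z2 [cz2 hz2] Ez2] := lift_conv (cC false (ratr q2)) hc2.
move: hz1 hz2 => /= hz1 hz2.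
have Ez1' : z1.1 = c1 by exact: Ez1.
have Ez2' : z2.1 = c2 by exact: Ez2.
rewrite mul1r scale1r in hz1.
rewrite mulN1r scaleN1r ltrN2 in hz2.
rewrite /op_sum /l1_norm /=.
move: (ratr q1) (ratr q2) q1a q1b q2a q2b hz1 hz2 => t1 t2 q1a q1b q2a q2b hz1 hz2.
have dist : forall a : R, t1 < a < t2 -> `|xs x0 - a| < e / 2.
  move=> a /andP[h1 h2]; rewrite ltr_norml; apply/andP; split; lra.
case: (ltP z1.2 t2) => h1.
  exists z1 => //=; rewrite Ez1'.
  have := dist z1.2; rewrite hz1 h1 => /(_ isT) hd; lra.
case: (ltP t1 z2.2) => h2.
  exists z2 => //=; rewrite Ez2'.
  have := dist z2.2; rewrite hz2 h2 => /(_ isT) hd; lra.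
have dpos : 0 < z1.2 - z2.2 by lra.
pose la := (xs x0 - z2.2) / (z1.2 - z2.2).
have la0 : 0 <= la by apply: divr_ge0; lra.
have la1 : la <= 1 by rewrite ler_pdivrMr //; lra.
exists (la *: z1 + (1 - la) *: z2).
  by apply: conv_hull_convex => //; rewrite la0 la1.
rewrite /=.
have -> : xs x0 - (la *: z1.2 + (1 - la) *: z2.2) = 0.
  have -> : la *: z1.2 + (1 - la) *: z2.2 = la * z1.2 + (1 - la) * z2.2 by [].
  rewrite /la; field; apply/eqP; lra.
rewrite normr0 addr0 Ez1' Ez2'.
have -> : T x0 - (la *: c1 + (1 - la) *: c2) = la *: (T x0 - c1) + (1 - la) *: (T x0 - c2).
  rewrite !scalerBr addrACA -scalerDl.
  have -> : la + (1 - la) = 1 by ring.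
  by rewrite scale1r opprD.
apply: (le_lt_trans (ler_normD _ _)); rewrite (normrZ la) (normrZ (1 - la)) (ger0_norm la0) ger0_norm; last lra.
have f1 : la * `|T x0 - c1| <= la * (e / 2) by apply: ler_wpM2l => //; apply: ltW.
have f2 : (1 - la) * `|T x0 - c2| <= (1 - la) * (e / 2) by apply: ler_wpM2l; [lra | apply: ltW].
lra.
Qed.
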